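(* Let $n\ge 4$ and let $D_n$ be the tree on vertex set $\{1,\ldots,n\}$ with edges $\{1,3\}$, $\{2,3\}$ and $\{i,i+1\}$ for $3\le i\le n-1$, with adjacency matrix $A$; let $W(D_n)=[e,Ae,\ldots,A^{n-1}e]$ with $e$ the all-ones vector of length $n$, and let $\hat W(D_n)$ be obtained from $W(D_n)$ by deleting the first row and the last column. Then $W(D_n)$ and the $n\times n$ matrix $\begin{pmatrix}0&0\\ \hat W(D_n)&0\end{pmatrix}$ (first row zero, last column zero) have the same Smith normal form. In particular $\operatorname{rank}W(D_n)=\operatorname{rank}\hat W(D_n)$.
   Context: The Smith normal form of an integral square matrix $M$ is the diagonal matrix $\operatorname{diag}[d_1,\ldots,d_n]$ with nonnegative integers $d_i$, $d_i\mid d_{i+1}$, such that $UMV=\operatorname{diag}[d_1,\ldots,d_n]$ for some unimodular integer matrices $U,V$. *)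

(* Defs.v *)
From HB Require Import structures.
From mathcomp Require Import all_boot all_order all_algebra.
Set Implicit Arguments. Unset Strict Implicit. Unset Printing Implicit Defensive.
Import Order.TTheory GRing.Theory Num.Theory.
Local Open Scope ring_scope.

(* Vertices 1..n of the paper are the ordinals 0..n-1 (vertex k+1 <-> k). *)
Definition Dn_edge (i j : nat) : bool :=
  [|| (i == 0%N) && (j == 2%N), (i == 2%N) && (j == 0%N),
      (i == 1%N) && (j == 2%N), (i == 2%N) && (j == 1%N),
      (2 <= i)%N && (j == i.+1) | (2 <= j)%N && (i == j.+1)].

Definition Dn_adj (n : nat) : 'M[int]_n :=
  \matrix_(i < n, j < n) (Dn_edge i j)%:R.

Definition ones (n : nat) : 'cV[int]_n := const_mx 1.

Definition WDn (n : nat) : 'M[int]_n :=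
  \matrix_(i < n, j < n) ((Dn_adj n ^+ j) *m ones n) i 0.

Definition WDn_at (n : nat) (i j : nat) : int :=
  match @insub nat (fun k => (k < n)%N) 'I_n i,
        @insub nat (fun k => (k < n)%N) 'I_n j with
  | Some i', Some j' => WDn n i' j'
  | _, _ => 0
  end.

Definition hatWDn (n : nat) : 'M[int]_(n.-1) :=
  \matrix_(i < n.-1, j < n.-1) WDn_at n i.+1 j.

Definition hatWDn_at (n : nat) (i j : nat) : int :=
  match @insub nat (fun k => (k < n.-1)%N) 'I_n.-1 i,
        @insub nat (fun k => (k < n.-1)%N) 'I_n.-1 j with
  | Some i', Some j' => hatWDn n i' j'
  | _, _ => 0
  end.

Definition borderedWDn (n : nat) : 'M[int]_n :=
  \matrix_(i < n, j < n)
    (if (i != 0%N :> nat) && (j != n.-1 :> nat)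
     then hatWDn_at n i.-1 j else 0).

Definition unimodular (n : nat) (U : 'M[int]_n) : Prop := U \in unitmx.

Definition is_Smith_normal_form (n : nat) (M : 'M[int]_n) (d : seq int) : Prop :=
  [/\ size d = n,
      all (fun x => 0 <= x) d,
      (forall k, (k.+1 < n)%N -> (d`_k %| d`_k.+1)%Z) &
      exists U V : 'M[int]_n, [/\ unimodular U, unimodular V &
        U *m M *m V = \matrix_(i < n, j < n) (d`_i *+ (i == j :> nat))]].

Definition int_rank (m n : nat) (M : 'M[int]_(m, n)) : nat :=
  \rank (map_mx (intr : int -> rat) M).

(* Main.v *)
Require Import Defs.
From mathcomp Require Import all_boot all_order all_algebra zify.
Set Implicit Arguments. Unset Strict Implicit. Unset Printing Implicit Defensive.
Import Order.TTheory GRing.Theory Num.Theory.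
Local Open Scope ring_scope.

Lemma sum_nat_delta N a (F : 'I_N.+1 -> int) :
  \sum_(k < N.+1) ((k : nat) == a)%:R * F k = if (a < N.+1)%N then F (inord a) else 0.
Proof.
case: ltnP => h.
  rewrite (bigD1 (inord a)) //= inordK // eqxx mul1r big1 ?addr0 // => k hk.
  have -> : ((k : nat) == a) = false.
    apply/negP => /eqP ea; move: hk; rewrite -ea inord_val eqxx //.
  by rewrite mul0r.
rewrite big1 // => k _.
have -> : ((k : nat) == a) = false by apply/negP => /eqP ea; move: (ltn_ord k); rewrite ea ltnNge h.
by rewrite mul0r.
Qed.

Lemma sum_nat_deltar N a (F : 'I_N.+1 -> int) :
  \sum_(k < N.+1) F k * ((k : nat) == a)%:R = if (a < N.+1)%N then F (inord a) else 0.
Proof. rewrite -sum_nat_delta; apply: eq_bigr => k _; exact: mulrC. Qed.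

Section S.
Variable p : nat.
Local Notation n := p.+2.

Definition Pm : 'M[int]_(n, p.+1) := \matrix_(i, k) ((k : nat) == (i : nat).-1)%:R.
Definition Bf (r c : nat) : int :=
  if (r == 1%N) && (c == 0%N) then 2 else ((r == c.+1) || (c == r.+1))%:R.
Definition Bm : 'M[int]_(p.+1) := \matrix_(r, c) Bf r c.

Lemma mulPmx m (M : 'M[int]_(p.+1, m)) i j : (Pm *m M) i j = M (inord (i : nat).-1) j.
Proof.
rewrite mxE (eq_bigr (fun k : 'I_p.+1 => ((k : nat) == (i:nat).-1)%:R * M k j)); last by move=> k _; rewrite mxE.
rewrite sum_nat_delta; case: ltnP => // h; move: (ltn_ord i); lia.
Qed.

Lemma mulmxP m (M : 'M[int]_(m, n)) i (j : 'I_p.+1) :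
  (M *m Pm) i j = M i (inord (j : nat).+1) + ((j : nat) == 0%N)%:R * M i (inord 0).
Proof.
rewrite mxE (eq_bigr (fun k : 'I_n => M i k * ((k : nat) == (j : nat).+1)%:R +
    ((j : nat) == 0%N)%:R * (M i k * ((k : nat) == 0%N)%:R))); last first.
  move=> k _; rewrite mxE; case: k => [[|[|k]] hk] /=; case: j => [[|j] hj] /=;
    rewrite ?mulr0 ?mulr1 ?addr0 ?add0r ?mul1r ?mul0r //.
  by rewrite eqSS eq_sym.
rewrite (@big_split int 0 +%R) /= -mulr_sumr !sum_nat_deltar /= ltnS ltn_ord.
by [].
Qed.

Lemma APPB : Dn_adj n *m Pm = Pm *m Bm.
Proof.
apply/matrixP => i j; rewrite mulmxP mulPmx !mxE.
rewrite !inordK; last by rewrite ltnS ltn_ord.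
2: by move: (ltn_ord i); lia.
2: by [].
rewrite /Bf /Dn_edge.
case: i => [[|[|[|i]]] hi] /=; case: j => [[|[|j]] hj] //=.
all: by rewrite !eqSS /= ?mul0r ?addr0 // orbC.
Qed.

Lemma APkPBk k : (Dn_adj n ^+ k) *m Pm = Pm *m Bm ^+ k.
Proof.
elim: k => [|k IH]; first by rewrite !expr0 mul1mx mulmx1.
by rewrite !exprSr -!mulmxE -mulmxA APPB mulmxA IH -mulmxA.
Qed.

Definition onesB : 'cV[int]_(p.+1) := const_mx 1.
Lemma ones_P : ones n = Pm *m onesB.
Proof. by apply/matrixP => i j; rewrite mulPmx !mxE. Qed.

Definition W := WDn n.
Lemma WE i (j : 'I_n) : W i j = (Pm *m (Bm ^+ j *m onesB)) i 0.
Proof. by rewrite /W /WDn mxE ones_P mulmxA APkPBk mulmxA. Qed.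

Definition one : 'I_n := inord 1.
Lemma twin j : W ord0 j = W one j.
Proof. by rewrite !WE !mulPmx /one inordK. Qed.

Definition cB := char_poly Bm.
Lemma size_cB : size cB = n.
Proof. by rewrite /cB size_char_poly. Qed.
Lemma cB_last : cB`_p.+1 = 1.
Proof. by have /monicP := char_poly_monic Bm; rewrite lead_coefE -/cB size_cB. Qed.

Lemma CH_sum : \sum_(k < n) cB`_k *: Bm ^+ k = 0.
Proof.
have := Cayley_Hamilton Bm; rewrite -/cB -{1}(coefK cB) poly_def size_cB.
rewrite linear_sum /= => H; apply: (etrans _ H); apply: eq_bigr => k _.
by rewrite linearZ /= rmorphXn /= horner_mx_X.
Qed.

Lemma W_rel i : \sum_(k < n) W i k * cB`_k = 0.
Proof.
have : (Pm *m (\sum_(k < n) cB`_k *: Bm ^+ k) *m onesB) i 0 = 0.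
  by rewrite CH_sum mulmx0 mul0mx mxE.
rewrite mulmx_sumr mulmx_suml summxE => H; apply: (etrans _ H); apply: eq_bigr => k _.
by rewrite WE -scalemxAr -scalemxAl [in RHS]mxE -mulmxA mulrC.
Qed.

Definition Vm : 'M[int]_n := \matrix_(i, j) (if j == ord_max then cB`_i else ((i:nat) == j)%:R).
Lemma mulWV i j : (W *m Vm) i j = if j == ord_max then 0 else W i j.
Proof.
rewrite mxE; case: eqP => [->|ne].
  apply: (etrans _ (W_rel i)); apply: eq_bigr => k _; by rewrite [Vm _ _]mxE eqxx.
transitivity (\sum_(k < n) W i k * ((k:nat) == j)%:R).
  by apply: eq_bigr => k _; rewrite [Vm _ _]mxE; case: eqP.
by rewrite sum_nat_deltar ltn_ord inord_val.
Qed.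

Definition Um : 'M[int]_n :=
  \matrix_(i, j) (((j:nat) == i)%:R - ((i:nat) == 0%N)%:R * ((j:nat) == 1%N)%:R).
Lemma mulUM m (M : 'M[int]_(n, m)) i j :
  (Um *m M) i j = M i j - ((i:nat) == 0%N)%:R * M one j.
Proof.
rewrite mxE (eq_bigr (fun k : 'I_n => ((k:nat) == i)%:R * M k j -
   ((i:nat) == 0%N)%:R * (((k:nat) == 1%N)%:R * M k j))); last first.
  by move=> k _; rewrite mxE mulrBl mulrA.
by rewrite sumrB -mulr_sumr !sum_nat_delta ltn_ord inord_val.
Qed.

Lemma Um_unit : Um \in unitmx.
Proof.
rewrite unitmxE -det_tr det_trig.
  rewrite big1 ?unitr1 // => i _; rewrite !mxE eqxx.
  by case: (nat_of_ord i) => [|[|k]] //=; rewrite ?mulr0 ?mul0r subr0.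
apply/forallP => i; apply/forallP => j; apply/implyP => hij.
rewrite !mxE; apply/eqP; have -> : ((i:nat) == j) = false by apply/negP => /eqP h; move: hij; rewrite h ltnn.
have -> : ((j:nat) == 0%N) = false by apply/negP => /eqP h; move: hij; rewrite h.
by rewrite mul0r subr0.
Qed.

Lemma Vm_unit : Vm \in unitmx.
Proof.
rewrite unitmxE -det_tr det_trig.
  rewrite big1 ?unitr1 // => i _; rewrite !mxE eqxx; case: eqP => // ->; exact: cB_last.
apply/forallP => i; apply/forallP => j; apply/implyP => hij.
rewrite !mxE; apply/eqP; case: eqP => [ei|_].
  by move: hij (ltn_ord j); rewrite ei /=; lia.
by have -> : ((j:nat) == i) = false by apply/negP => /eqP h; move: hij; rewrite h ltnn.
Qed.

Lemma insubO N k (h : (k < N)%N) : @insub nat (fun k => (k < N)%N) 'I_N k = Some (Ordinal h).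
Proof. by rewrite insubT /=; congr Some; exact: val_inj. Qed.

Lemma bordE i j : borderedWDn n i j =
  if ((i:nat) != 0%N) && ((j:nat) != p.+1) then W i j else 0.
Proof.
rewrite mxE; case: ifP => // /andP[hi hj].
have h1 : ((i:nat).-1 < p.+1)%N by move: (ltn_ord i); lia.
have h2 : ((j:nat) < p.+1)%N by move: (ltn_ord j) hj; lia.
rewrite /hatWDn_at (insubO h1) (insubO h2) mxE /WDn_at /=.
have h3 : ((i:nat).-1.+1 < n)%N by move: (ltn_ord i); lia.
have h4 : ((j:nat) < n)%N by [].
rewrite (insubO h3) (insubO h4) /W; congr (WDn n _ _); apply: val_inj => /=; lia.
Qed.

Lemma UWV : Um *m (W *m Vm) = borderedWDn n.
Proof.
apply/matrixP => i j; rewrite mulUM !mulWV bordE.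
case: eqP => [ej|nej].
  by rewrite ej /= eqxx andbF mulr0 subr0.
have -> : ((j:nat) != p.+1) by apply/eqP => h; apply: nej; apply: val_inj.
case: eqP => [ei|nei]; last by rewrite mul0r subr0 andbT.
have -> : i = ord0 by apply: val_inj.
by rewrite mul1r twin subrr.
Qed.

Definition P1 : 'M[int]_(n, p.+1) :=
  \matrix_(i, k) (((i:nat) != 0%N)%:R * ((k:nat) == (i:nat).-1)%:R).
Definition P2 : 'M[int]_(p.+1, n) := \matrix_(k, j) (((k:nat) == j)%:R).

Lemma mulP1 m (X : 'M[int]_(p.+1, m)) i j :
  (P1 *m X) i j = ((i:nat) != 0%N)%:R * X (inord (i:nat).-1) j.
Proof.
rewrite mxE (eq_bigr (fun k : 'I_p.+1 => ((i:nat) != 0%N)%:R * (((k:nat) == (i:nat).-1)%:R * X k j))); last first.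
  by move=> k _; rewrite mxE mulrA.
rewrite -mulr_sumr sum_nat_delta; case: ltnP => // h; move: (ltn_ord i); lia.
Qed.

Lemma mulP2 m (X : 'M[int]_(m, p.+1)) i j :
  (X *m P2) i j = if ((j:nat) < p.+1)%N then X i (inord j) else 0.
Proof.
rewrite mxE -sum_nat_deltar; apply: eq_bigr => k _; by rewrite mxE.
Qed.

Lemma mulP1T m (X : 'M[int]_(n, m)) k l : (P1^T *m X) k l = X (inord (k:nat).+1) l.
Proof.
rewrite mxE (eq_bigr (fun i : 'I_n => ((i:nat) == (k:nat).+1)%:R * X i l)); last first.
  move=> i _; rewrite !mxE; congr (_ * _).
  by case: (nat_of_ord i) => [|i'] /=; rewrite ?mul0r ?mul1r // eqSS eq_sym.
by rewrite sum_nat_delta ltnS ltn_ord.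
Qed.

Lemma mulP2T m (X : 'M[int]_(m, n)) k l : (X *m P2^T) k l = X k (inord l).
Proof.
rewrite mxE (eq_bigr (fun j : 'I_n => X k j * ((j:nat) == l)%:R)); last first.
  by move=> j _; rewrite !mxE eq_sym.
by rewrite sum_nat_deltar ltnS ltnW.
Qed.

Lemma HE k l : hatWDn n k l = W (inord (k:nat).+1) (inord l).
Proof.
rewrite mxE /WDn_at.
have h3 : ((k:nat).+1 < n)%N by rewrite ltnS ltn_ord.
have h4 : ((l:nat) < n)%N by rewrite ltnW // ltnS ltn_ord.
rewrite (insubO h3) (insubO h4) /W; congr (WDn n _ _); apply: val_inj => /=; rewrite inordK //.
Qed.

Lemma bordH : borderedWDn n = P1 *m hatWDn n *m P2.
Proof.
apply/matrixP => i j; rewrite bordE -mulmxA mulP1 mulP2.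
have hi : ((i:nat).-1 < p.+1)%N by move: (ltn_ord i); lia.
case: eqP => [ei|nei] /=; first by rewrite ei mul0r.
rewrite mul1r HE inordK // prednK; last by case: (nat_of_ord i) nei.
rewrite inord_val; case: ltnP => hj.
  have -> : (j : nat) != p.+1 by move: hj; lia.
  by rewrite inordK ?inord_val // ltnW.
have -> : (j : nat) = p.+1 by move: (ltn_ord j) hj; lia.
by rewrite eqxx.
Qed.

Lemma Hbord : hatWDn n = P1^T *m borderedWDn n *m P2^T.
Proof.
apply/matrixP => k l; rewrite -mulmxA mulP1T mulP2T bordE HE !inordK //.
  by have -> : (l : nat) != p.+1 by move: (ltn_ord l); lia.
  by rewrite ltnW // ltnS ltn_ord.
by rewrite ltnS ltn_ord.
Qed.
End S.

Definition dnorm N (d : seq int) : seq int := mkseq (fun i => Posz (absz d`_i)) N.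

Lemma SNF_of N (M : 'M[int]_N.+1) L R d :
  L \in unitmx -> R \in unitmx -> sorted dvdz d ->
  M = L *m (\matrix_(i, j) (d`_i *+ ((i:nat) == j))) *m R ->
  is_Smith_normal_form M (dnorm N.+1 d).
Proof.
move=> uL uR sd eM; split.
- by rewrite size_mkseq.
- by apply/allP => x /mapP [i _ ->]; exact: le0z_nat.
- move=> k hk; rewrite /dnorm !nth_mkseq ?(ltnW hk) // dvdzE /=.
  have [hd|hd] := ltnP k.+1 (size d).
    exact: (sortedP 0 sd) k hd.
  by rewrite (nth_default 0 hd) dvdn0.
pose s i := (-1) ^+ (d`_i < 0)%R : int.
pose S : 'M[int]_N.+1 := \matrix_(i, j) (((i:nat) == j)%:R * s i).
have mulS : forall (X : 'M[int]_N.+1) i j, (S *m X) i j = s i * X i j.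
  move=> X i j; rewrite mxE (eq_bigr (fun k : 'I_N.+1 => s i * (((k:nat) == i)%:R * X k j))).
    by rewrite -mulr_sumr sum_nat_delta ltn_ord inord_val.
  by move=> k _; rewrite mxE eq_sym mulrCA mulrA.
have SS : S *m S = 1%:M.
  apply/matrixP => i j; rewrite mulS !mxE mulrCA.
  rewrite /s -signr_addb addbb expr0 mulr1. by [].
have uS : S \in unitmx by case: (mulmx1_unit SS).
  have eD : (\matrix_(i, j) (d`_i *+ ((i:nat) == j)) : 'M[int]_N.+1) =
          S *m \matrix_(i, j) ((dnorm N.+1 d)`_i *+ ((i:nat) == j)).
  apply/matrixP => i j; rewrite mulS !mxE /dnorm nth_mkseq // abszE.
  by rewrite mulrnAr /s -numEsign.
exists (invmx (L *m S)), (invmx R); split.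
- by rewrite /unimodular unitmx_inv unitmx_mul uL uS.
- by rewrite /unimodular unitmx_inv.
rewrite eM eD !mulmxA -(mulmxA (invmx _) L S) mulVmx ?unitmx_mul ?uL ?uS // mul1mx mulmxK //.
Qed.

Lemma rank_le m1 n1 m2 n2 (A : 'M[int]_(m1, n1)) (L : 'M[int]_(m2, m1)) (R : 'M[int]_(n1, n2)) :
  (int_rank (L *m A *m R) <= int_rank A)%N.
Proof.
rewrite /int_rank !map_mxM; apply: leq_trans (mxrankM_maxl _ _) _; exact: mxrankM_maxr.
Qed.

Lemma rank_eq m1 n1 m2 n2 (A : 'M[int]_(m1, n1)) (B : 'M[int]_(m2, n2)) L R L' R' :
  B = L *m A *m R -> A = L' *m B *m R' -> int_rank A = int_rank B.
Proof.
move=> hB hA; apply/eqP; rewrite eqn_leq; apply/andP; split.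
  by rewrite {1}hA rank_le.
by rewrite hB rank_le.
Qed.

Theorem lemma4p4 (n : nat) (hn : (4 <= n)%N) :
  (exists d : seq int,
      is_Smith_normal_form (WDn n) d /\ is_Smith_normal_form (borderedWDn n) d)
  /\ int_rank (WDn n) = int_rank (hatWDn n).
Proof.
case: n hn => [|[|p]] // _.
have eB := UWV p.
have [L uL [R uR [d sd eM]]] := int_Smith_normal_form (W p).
split.
  exists (dnorm p.+2 d); split; first exact: (SNF_of uL uR sd eM).
  apply: (SNF_of (L := Um p *m L) (R := R *m Vm p)).
  - by rewrite unitmx_mul Um_unit.
  - by rewrite unitmx_mul Vm_unit uR.
  - exact: sd.
  by rewrite -eB {1}eM !mulmxA.
have r1 : int_rank (WDn p.+2) = int_rank (borderedWDn p.+2).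
  apply: (rank_eq (L := Um p) (R := Vm p) (L' := invmx (Um p)) (R' := invmx (Vm p))).
    by rewrite -eB mulmxA.
  by rewrite -eB mulKmx ?Um_unit // mulmxK ?Vm_unit.
rewrite r1; apply/esym.
exact: (rank_eq (L := P1 p) (R := P2 p) (L' := (P1 p)^T) (R' := (P2 p)^T) (bordH p) (Hbord p)).
Qed.
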